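(* Let $\theta>0$ and consider the Softplus network $a^{(0)}=x$, $z^{(l)}=b^{(l)}+W^{(l)}a^{(l-1)}$, $a^{(l)}=\sigma_\theta(z^{(l)})$ with $\sigma_\theta(z)=\theta\log(1+e^{z/\theta})$. Assume $\gamma^{(l)}_i>0$ for all $l,i$. Fix $m\ge1$, a neuron $j$ of layer $m$, a label $q$, and $u=s^{(m)}_{j,q}$. Then for every $0\le l\le m$ and neuron $i$ of layer $l$, $\partial a^{(m)}_j/\partial a^{(l)}_i=\xi_{q,+}\bigl(\Gamma^\theta_u(s^{(l)}_{i,+})-\Gamma^\theta_u(s^{(l)}_{i,-})\bigr)$, where $\partial a^{(m)}_j/\partial a^{(l)}_i=[D^{(m)}W^{(m)}\cdots D^{(l+1)}W^{(l+1)}]_{ji}$ with $D^{(l')}=\mathrm{diag}(\sigma'_\theta(z^{(l')}))$.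
   Context: $\sigma'_\theta(z)=1/(1+e^{-z/\theta})$. $W^{(l,\pm)}=(W^{(l)})^\pm$ entrywise ($u^\pm=\max(\pm u,0)$). Labels $r,r',q\in\{+,-\}$; $r\oplus r'=+$ if $r=r'$, else $-$; $\xi_{q,+}=1$ if $q=+$, $-1$ if $q=-$. Soft Stopping-Game chain: states $s^{(l)}_{i,r}$ ($0\le l\le L$) plus a cemetery $\perp$. From $s^{(l)}_{i,r}$ with $l\ge1$: with probability $1-\sigma'_\theta(z^{(l)}_i)$ go to $\perp$; with probability $\sigma'_\theta(z^{(l)}_i)\,W^{(l,r\oplus r')}_{ih}/\gamma^{(l)}_i$ go to $s^{(l-1)}_{h,r'}$, where $\gamma^{(l)}_i=\sum_h|W^{(l)}_{ih}|$, and such a continuation carries discount factor $\gamma^{(l)}_i$. Layer-0 states and $\perp$ are terminal. For a trajectory $\tau$ from $\tau_0=u$, $d_0=1$ and $d_t$ is the product of the discount factors of the continuations taken before time $t$. $\Gamma^\theta_u(v)=\mathbb{E}[\sum_t d_t\mathbf 1\{\tau_t=v\}]$. *)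

(* Defs.v *)
From HB Require Import structures.
From mathcomp Require Import all_boot all_order all_algebra.
From mathcomp Require Import all_classical all_reals all_analysis.
Set Implicit Arguments. Unset Strict Implicit. Unset Printing Implicit Defensive.
Import Order.TTheory GRing.Theory Num.Theory.
Local Open Scope ring_scope.

(* Labels r in {+,-} are encoded as bool: true = +, false = -. *)
Definition lab_xor (r r' : bool) : bool := r == r'.
Definition xi (q : bool) {R : numDomainType} : R := if q then 1 else -1.

Section SoftplusNet.
Variable R : realType.
Variable theta : R.
(* widths: layer l has neurons 0 .. n l - 1 *)
Variable n : nat -> nat.
(* W l i h = W^{(l)}_{ih}, for 1 <= l, i < n l, h < n (l-1) ; b l i = b^{(l)}_i *)
Variable W : nat -> nat -> nat -> R.
Variable b : nat -> nat -> R.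
Variable x : nat -> R.

Definition softplus (t : R) : R := theta * ln (1 + expR (t / theta)).
Definition dsoftplus (t : R) : R := 1 / (1 + expR (- t / theta)).

Fixpoint act (l : nat) : nat -> R :=
  match l with
  | 0 => x
  | l'.+1 => fun i => softplus (b l'.+1 i + \sum_(h < n l') W l'.+1 i h * act l' h)
  end.

Definition preact (l i : nat) : R := b l i + \sum_(h < n l.-1) W l i h * act l.-1 h.

Definition Wpm (l : nat) (r : bool) (i h : nat) : R :=
  if r then Num.max (W l i h) 0 else Num.max (- W l i h) 0.

Definition gamma (l i : nat) : R := \sum_(h < n l.-1) `|W l i h|.

Fixpoint jac (m l : nat) : nat -> nat -> R :=
  match m with
  | 0 => fun j i => (j == i)%:R
  | m'.+1 => fun j i =>
      if l == m'.+1 then (j == i)%:R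
      else \sum_(k < n m') dsoftplus (preact m'.+1 j) * W m'.+1 j k * jac m' l k i
  end.

(* States of the Soft Stopping-Game chain *)
Inductive state : Type := Cem | St of nat & nat & bool.

Definition state_eqb (s s' : state) : bool :=
  match s, s' with
  | Cem, Cem => true
  | St l i r, St l' i' r' => [&& l == l', i == i' & r == r']
  | _, _ => false
  end.

(* visit v t s = E_s[ d_t 1{tau_t = v} ]  (expectation over trajectories started at s),
   computed by conditioning on the first step (Markov property).  Terminal states
   (layer 0 and the cemetery) end the trajectory, so tau_t is undefined for later t. *)
Fixpoint visit (v : state) (t : nat) (s : state) : R :=
  match t with
  | 0 => (state_eqb s v)%:R
  | t'.+1 =>
      match s with
      | Cem => 0
      | St 0 _ _ => 0
      | St l'.+1 i r =>
          (1 - dsoftplus (preact l'.+1 i)) * visit v t' Cem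
          + \sum_(h < n l') \sum_(r' : bool)
              (dsoftplus (preact l'.+1 i) * Wpm l'.+1 (lab_xor r r') i h / gamma l'.+1 i)
              * gamma l'.+1 i * visit v t' (St l' h r')
      end
  end.

Definition Gam (u v : state) : R := limn (fun N => \sum_(t < N) visit v t u).

End SoftplusNet.

(* Main.v *)
Require Import Defs.
From HB Require Import structures.
From mathcomp Require Import all_boot all_order all_algebra.
From mathcomp Require Import all_classical all_reals all_analysis.
From mathcomp Require Import ring.
Import Order.TTheory GRing.Theory Num.Theory.
Local Open Scope ring_scope.

Section Aux.
Variables (R : realType) (theta : R) (n : nat -> nat)
  (W : nat -> nat -> nat -> R) (b : nat -> nat -> R) (x : nat -> R).

Lemma visit_Cem l i r t : visit theta n W b x (St l i r) t Cem = 0.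
Proof. by case: t. Qed.

Lemma visit_off l i r0 t : forall m j r, (t + l != m)%N ->
  visit theta n W b x (St l i r0) t (St m j r) = 0.
Proof.
elim: t => [|t IH] m j r H /=.
  by rewrite add0n eq_sym in H; rewrite (negbTE H).
case: m H => [|m] H //.
rewrite visit_Cem mulr0 add0r big1 // => h _.
rewrite big1 // => r' _; rewrite IH ?mulr0 //.
Qed.

Lemma cancel_gamma m j h r c : (h < n m)%N ->
  c * Wpm W m.+1 r j h / gamma n W m.+1 j * gamma n W m.+1 j
  = c * Wpm W m.+1 r j h.
Proof.
move=> hn; have [g0|gn0] := eqVneq (gamma n W m.+1 j) 0; last by rewrite divfK.
have Wz : W m.+1 j h = 0.
  apply/normr0_eq0.
  have := @psumr_eq0P R _ xpredT (fun h : 'I_(n m) => `|W m.+1 j h|)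
    (fun _ _ => normr_ge0 _) g0 (Ordinal hn) isT.
  by [].
have ->: Wpm W m.+1 r j h = 0 by rewrite /Wpm Wz oppr0; case: r; apply/eqP; rewrite eq_le ?ge_max ?le_max //= lexx.
by rewrite !(mulr0, mul0r).
Qed.

Lemma key l i d : forall m j q, m = (l + d)%N ->
  visit theta n W b x (St l i true) d (St m j q)
  - visit theta n W b x (St l i false) d (St m j q)
  = xi q * jac theta n W b x m l j i.
Proof.
elim: d => [|d IH] m j q -> /=.
  rewrite addn0 !eqxx /=.
  have -> : jac theta n W b x l l j i = (j == i)%:R by case: l => [|l] //=; rewrite eqxx.
  by case: q; case: (j == i); rewrite /xi /= ?subr0 ?sub0r ?mulr1 ?mulr0 ?oppr0.
rewrite addnS /= !visit_Cem !mulr0 !add0r.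
have -> : (l == (l + d).+1) = false.
  by apply/negbTE; rewrite -addnS -{1}(addn0 l) eqn_add2l.
rewrite -sumrB mulr_sumr; apply: eq_bigr => h _.
rewrite big_bool big_bool /=.
rewrite !cancel_gamma //.
have Et := IH (l + d)%N h true erefl.
have Ef := IH (l + d)%N h false erefl.
rewrite /xi /= mul1r mulN1r in Et Ef.
move: Et Ef.
set Vt1 := visit _ _ _ _ _ _ _ (St _ h true).
set Vt2 := visit _ _ _ _ _ _ _ (St _ h true).
set Vf1 := visit _ _ _ _ _ _ _ (St _ h false).
set Vf2 := visit _ _ _ _ _ _ _ (St _ h false).
set J := jac _ _ _ _ _ _ _ _ _.
set ds := dsoftplus _ _.
move=> Et Ef.
have e1 : Vt1 = Vt2 + J by rewrite -Et addrC subrK.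
have e2 : Vf1 = Vf2 - J by rewrite -Ef addrC subrK.
rewrite e1 e2 /Wpm /lab_xor.
set w := W _ j h.
have hw : Num.max w 0 - Num.max (- w) 0 = w.
  case: (boolP (0 <= w)) => hw.
  rewrite (max_idPl hw) (max_idPr _) ?subr0 // oppr_le0 //.
  have hw' : w <= 0 by rewrite le_eqVlt; apply/orP; right; rewrite ltNge.
  rewrite (max_idPr hw') (max_idPl _) ?sub0r ?opprK ?add0r // ?oppr_ge0 ?oppr_le0 //.
case: q => /=; rewrite /xi -[X in _ = _ * (_ * X * _)]hw; ring.
Qed.

Lemma Gam_eq m j q l i r : (l <= m)%N ->
  Gam theta n W b x (St m j q) (St l i r)
  = visit theta n W b x (St l i r) (m - l) (St m j q).
Proof.
move=> lm; rewrite /Gam; apply: norm_lim_near_cst.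
near=> N.
have hN : (m - l < N)%N by near: N; exists (m - l).+1.
rewrite (bigD1 (Ordinal hN)) //= big1 ?addr0 // => t tne.
apply: visit_off; apply: contra tne => /eqP ht.
apply/eqP/val_inj => /=; rewrite -ht addnK //.
Unshelve. all: by end_near.
Qed.

End Aux.

Theorem mainTheorem7 (R : realType) (theta : R) (L : nat) (n : nat -> nat)
  (W : nat -> nat -> nat -> R) (b : nat -> nat -> R) (x : nat -> R) :
  0 < theta ->
  (forall l i, (1 <= l <= L)%N -> (i < n l)%N -> 0 < gamma n W l i) ->
  forall (m j : nat) (q : bool), (1 <= m <= L)%N -> (j < n m)%N ->
  let u := St m j q in
  forall l i, (l <= m)%N -> (i < n l)%N ->
    jac theta n W b x m l j i
    = xi q * (Gam theta n W b x u (St l i true) - Gam theta n W b x u (St l i false)).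
Proof.
move=> _ _ m j q _ _ u l i lm _.
rewrite /u !Gam_eq // key ?subnKC // mulrA.
by clear u; case: q; rewrite /xi /= ?mulr1 ?mul1r // mulrNN !mul1r.
Qed.
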